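(* Let $p,q\ge2$ be coprime integers, $c=c_{p,q}$, $t=-q/p$, and let $0<k,r<p$, $0<l,s<q$ be integers and $h\in\mathbb C$. Let $\sigma=\sum_{j_1\ge\dots\ge j_u\ge1,\ j_1+\dots+j_u=rs}\rho_{j_1,\dots,j_u}L_{-j_1}\cdots L_{-j_u}\in U(\mathfrak{vir})$ (with $\rho_{j_1,\dots,j_u}\in\mathbb C$) be such that $\sigma v$ is a nonzero singular vector of the Verma module $M^c_{h_{r,s}}$, $v$ its highest weight vector. Define $\rho(\lambda,\mu)\in\mathbb C$ by $\sigma f_0=\rho(\lambda,\mu)f_{rs}$ in the Witt-algebra module $\mathcal F_{\lambda,\mu}$, where each $L_{-j}$ acts as $l_{-j}$. If there exists a nonzero intertwining operator of type $\binom{L^c_h}{L^c_{h_{k,l}}\ L^c_{h_{r,s}}}$, then $$\rho\big(-h_{k,l},\ h_{r,s}-h-h_{k,l}\big)=0.$$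
   Context: The Virasoro algebra $\mathfrak{vir}=\bigoplus_{n\in\mathbb Z}\mathbb CL_n\oplus\mathbb CC$ has brackets $[L_n,L_m]=(n-m)L_{n+m}+\frac{n^3-n}{12}\delta_{n,-m}C$, $C$ central. $\mathrm{Vir}^c$ is the universal Virasoro vertex algebra of central charge $c$ (vacuum $\mathbf1$, $T=L_{-1}$, conformal vector $L_{-2}\mathbf1$ with field $\sum_nL_nz^{-n-2}$). The Verma module $M^c_h=U(\mathfrak{vir})\otimes_{U(\bigoplus_{n\ge0}\mathbb CL_n\oplus\mathbb CC)}\mathbb Cm$ ($Cm=cm$, $L_0m=hm$, $L_nm=0$, $n\ge1$); a singular vector is a vector $w$ with $L_nw=0$ for all $n>0$ and $L_0w\in\mathbb Cw$. $L^c_h$ is the unique irreducible quotient of $M^c_h$, a $\mathrm{Vir}^c$-module with $T=L_{-1}$. $c_{p,q}=1-\frac{6(p-q)^2}{pq}$, $h_{k,l}=\frac{(lp-kq)^2-(p-q)^2}{4pq}$. The Witt algebra is $\bigoplus_{n\in\mathbb Z}\mathbb Cl_n$ with $[l_n,l_m]=(n-m)l_{n+m}$; for $\lambda,\mu\in\mathbb C$, $\mathcal F_{\lambda,\mu}$ is the Witt module with basis $f_j$ ($j\in\mathbb Z$) and $l_{-i}f_j=(\mu+j-\lambda(i+1))f_{j+i}$. An intertwining operator of type $\binom{M_3}{M_1\ M_2}$ between $\mathrm{Vir}^c$-modules is a linear map $a\mapsto\mathcal Y(a,z)=\sum_{n\in\mathbb C}a_{(n)}z^{-n-1}$ from $M_1$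 to $\mathrm{Hom}(M_2,M_3[[z]]z^{-S})$ (for some $S\subset\mathbb C$ with $S+\mathbb Z=S$, $S/\mathbb Z$ finite; formal sums $\sum_nf_nz^n$ with $n$ in a finite union of sets $-d+\mathbb Z_{\ge0}$, $d\in S$) such that $T\mathcal Y(a,z)-\mathcal Y(a,z)T=\mathcal Y(Ta,z)=\partial_z\mathcal Y(a,z)$ and for all $v\in\mathrm{Vir}^c$, $a\in M_1$, $b\in M_2$, $n,m\in\mathbb Z$, $k'\in\mathbb C$: $\sum_{j\ge0}(-1)^j\binom nj\big(v_{(m+n-j)}a_{(k'+j)}b-(-1)^na_{(n+k'-j)}v_{(m+j)}b\big)=\sum_{j\ge0}\binom mj(v_{(n+j)}a)_{(m+k'-j)}b$. *)

(* Defs.v *)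
From mathcomp Require Import all_boot all_order all_algebra.
From mathcomp.real_closed Require Import complex.
From mathcomp Require Import Rstruct.
From Stdlib Require Import Reals.

Set Implicit Arguments.
Unset Strict Implicit.
Unset Printing Implicit Defensive.
Import Order.TTheory GRing.Theory Num.Theory.
Local Open Scope ring_scope.

Definition C : numClosedFieldType := (Rdefinitions.R)[i].

Definition cpq (p q : nat) : C :=
  1 - 6%:R * (p%:R - q%:R) ^+ 2 / (p%:R * q%:R).
Definition hkl (p q k l : nat) : C :=
  (((l * p)%:R - (k * q)%:R) ^+ 2 - (p%:R - q%:R) ^+ 2) / (4%:R * p%:R * q%:R).

Definition binZ (p : int) (j : nat) : C :=
  (\prod_(i < j) (p%:~R - i%:R)) / (j`!)%:R.

Definition sgnZ (n : int) : C := (-1) ^+ absz n.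

(* L n is the action of L_n, C acts as the scalar c.                  *)
Definition vir_rep (c : C) (V : lmodType C) (L : int -> V -> V) : Prop :=
  (forall n (a : C) (x y : V), L n (a *: x + y) = a *: L n x + L n y) /\
  (forall (n m : int) (x : V),
     L n (L m x) - L m (L n x) =
       (n - m)%:~R *: L (n + m) x +
       (if n + m == 0 then ((n ^+ 3 - n)%:~R / 12%:R * c) *: x else 0)).

Definition vir_closed (V : lmodType C) (L : int -> V -> V) (S : V -> Prop) : Prop :=
  [/\ S 0, (forall x y, S x -> S y -> S (x + y)),
      (forall a x, S x -> S (a *: x)) & (forall n x, S x -> S (L n x))].

Definition vir_generated (V : lmodType C) (L : int -> V -> V) (w : V) : Prop :=
  forall S : V -> Prop, vir_closed L S -> S w -> forall x, S x.

Definition vir_irreducible (V : lmodType C) (L : int -> V -> V) : Prop :=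
  forall S : V -> Prop, vir_closed L S -> (exists x, S x /\ x <> 0) -> forall x, S x.

Definition hw_vector (V : lmodType C) (L : int -> V -> V) (h : C) (w : V) : Prop :=
  L 0 w = h *: w /\ (forall n : int, 0 < n -> L n w = 0).

Definition singular (V : lmodType C) (L : int -> V -> V) (x : V) : Prop :=
  (forall n : int, 0 < n -> L n x = 0) /\ exists e : C, L 0 x = e *: x.

Definition is_partition (J : seq nat) : bool :=
  sorted (fun a b : nat => leq b a) J && all (fun j : nat => leq 1 j) J.
Definition is_partition_of (J : seq nat) (n : nat) : bool :=
  is_partition J && (sumn J == n).

Definition mono_act (V : lmodType C) (L : int -> V -> V) (J : seq nat) (x : V) : V :=
  foldr (fun j y => L (- (j%:Z)) y) x J.

(* an element sigma = sum rho_J L_{-J} of U(vir), given as a list of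
   (coefficient, monomial) pairs, acting on x *)
Definition sigma_act (V : lmodType C) (L : int -> V -> V)
    (sigma : seq (C * seq nat)) (x : V) : V :=
  \sum_(t <- sigma) t.1 *: mono_act L t.2 x.

(* The Verma module M^c_h: a representation generated by a highest weight
   vector v of weight h on which the PBW monomials L_{-J} v (J a partition)
   are linearly independent. *)
Definition verma (c h : C) (V : lmodType C) (L : int -> V -> V) (v : V) : Prop :=
  [/\ vir_rep c L, hw_vector L h v, vir_generated L v &
      forall s : seq (C * seq nat),
        uniq (map snd s) -> all (fun t => is_partition t.2) s ->
        \sum_(t <- s) t.1 *: mono_act L t.2 v = 0 ->
        all (fun t => t.1 == 0) s].

Definition verma_singular (c h : C) (sigma : seq (C * seq nat)) : Prop :=
  exists (V : lmodType C) (L : int -> V -> V) (v : V),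
    [/\ verma c h L v, sigma_act L sigma v <> 0 & singular L (sigma_act L sigma v)].

Definition irr_hw (c h : C) (V : lmodType C) (L : int -> V -> V) (w : V) : Prop :=
  [/\ vir_rep c L, w <> 0, hw_vector L h w, vir_generated L w & vir_irreducible L].

Definition fin_sum (V : lmodType C) (t : nat -> V) (x : V) : Prop :=
  exists N : nat, (forall j, leq N j -> t j = 0) /\ x = \sum_(j < N) t j.

(* Vir^c-module structure on a Vir-module W: Y u q is the mode u_(q) of the
   element u = L_{-n1} ... L_{-nk} 1 of Vir^c (u = [:: n1; ...; nk]).
   It is (uniquely) determined by 1_(q) = delta_{q,-1} and the iterate
   formula for (omega_(1-n) u)_(q), with omega_(k) = L_{k-1}:
   (L_{-n} u)_(q) w = sum_j (-1)^j binom(1-n,j)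
        ( L_{-n-j} u_(q+j) w - (-1)^(1-n) u_(1-n+q-j) L_{j-1} w ). *)
Definition vir_modes (W : lmodType C) (L : int -> W -> W)
    (Y : seq nat -> int -> W -> W) : Prop :=
  (forall q w, Y [::] q w = if q == -1 then w else 0) /\
  (forall (n : nat) (u : seq nat) (q : int) (w : W),
     fin_sum (fun j : nat =>
        ((-1) ^+ j * binZ (1 - n%:Z) j) *:
          (L (- (n%:Z) - j%:Z) (Y u (q + j%:Z) w)
           - sgnZ (1 - n%:Z) *: Y u (1 - n%:Z + q - j%:Z) (L (j%:Z - 1) w)))
       (Y (n :: u) q w)).

Definition virc_basis (u : seq nat) : bool :=
  sorted (fun a b : nat => leq b a) u && all (fun j : nat => leq 2 j) u.

(* Intertwining operator of type (M3 ; M1 M2); I a x b = a_(x) b, x in C. *)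
Definition intertwining
    (M1 M2 M3 : lmodType C)
    (L1 : int -> M1 -> M1) (L2 : int -> M2 -> M2) (L3 : int -> M3 -> M3)
    (Y1 : seq nat -> int -> M1 -> M1) (Y2 : seq nat -> int -> M2 -> M2)
    (Y3 : seq nat -> int -> M3 -> M3)
    (I : M1 -> C -> M2 -> M3) : Prop :=
  (forall (al : C) a a' x b, I (al *: a + a') x b = al *: I a x b + I a' x b) /\
  (forall (al : C) a x b b', I a x (al *: b + b') = al *: I a x b + I a x b') /\
  (* values in M3[[z]] z^{-S} *)
  (exists S : C -> Prop,
     (forall x (k : int), S x -> S (x + k%:~R)) /\
     (exists s0 : seq C, forall x, S x -> exists2 e, e \in s0 & exists k : int, x = e + k%:~R) /\
     (forall a b, exists D : seq C, (forall d, d \in D -> S d) /\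
        forall x, I a x b <> 0 ->
          exists2 d, d \in D & exists k : nat, - x - 1 = - d + k%:R)) /\
  (* T Y(a,z) - Y(a,z) T = Y(Ta,z) = d/dz Y(a,z), T = L_{-1} *)
  (forall a x b, L3 (-1) (I a x b) - I a x (L2 (-1) b) = I (L1 (-1) a) x b) /\
  (forall a x b, I (L1 (-1) a) x b = - x *: I a (x - 1) b) /\
  (forall (v : seq nat) a b (n m : int) (k' : C), virc_basis v ->
     exists X : M3,
       fin_sum (fun j : nat =>
          ((-1) ^+ j * binZ n j) *:
            (Y3 v (m + n - j%:Z) (I a (k' + j%:R) b)
             - sgnZ n *: I a (n%:~R + k' - j%:R) (Y2 v (m + j%:Z) b))) X /\
       fin_sum (fun j : nat =>
          binZ m j *: I (Y1 v (n + j%:Z) a) (m%:~R + k' - j%:R) b) X).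

Definition nonzero_intertwining_exists (c h1 h2 h3 : C) : Prop :=
  exists (M1 M2 M3 : lmodType C)
    (L1 : int -> M1 -> M1) (L2 : int -> M2 -> M2) (L3 : int -> M3 -> M3)
    (w1 : M1) (w2 : M2) (w3 : M3)
    (Y1 : seq nat -> int -> M1 -> M1) (Y2 : seq nat -> int -> M2 -> M2)
    (Y3 : seq nat -> int -> M3 -> M3) (I : M1 -> C -> M2 -> M3),
    [/\ irr_hw c h1 L1 w1, irr_hw c h2 L2 w2 & irr_hw c h3 L3 w3] /\
    [/\ vir_modes L1 Y1, vir_modes L2 Y2 & vir_modes L3 Y3] /\
    intertwining L1 L2 L3 Y1 Y2 Y3 I /\
    exists a x b, I a x b <> 0.

(* Witt module F_{lam,mu}: a vector coef * f_j is the pair (coef, j);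
   l_{-i} f_j = (mu + j - lam (i+1)) f_{j+i}. *)
Definition witt_step (lam mu : C) (i : nat) (x : C * int) : C * int :=
  (x.1 * (mu + x.2%:~R - lam * (i.+1)%:R), x.2 + i%:Z).

Definition witt_mono (lam mu : C) (J : seq nat) : C * int :=
  foldr (witt_step lam mu) (1, 0) J.

(* rho(lam, mu): sigma f_0 = rho(lam,mu) f_{rs} (all monomials of sigma
   have degree rs, so each witt_mono lands in f_{rs}). *)
Definition witt_rho (sigma : seq (C * seq nat)) (lam mu : C) : C :=
  \sum_(t <- sigma) t.1 * (witt_mono lam mu t.2).1.

(* Main.v *)
Require Import Defs.
From mathcomp Require Import all_boot all_order all_algebra.
From mathcomp Require Import zify ring.
Import GRing.Theory Num.Theory.
Local Open Scope ring_scope.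

Definition pre (j : nat) (s : seq (C * seq nat)) := map (fun t => (t.1, j :: t.2)) s.
Definition scl (a : C) (s : seq (C * seq nat)) := map (fun t => (a * t.1, t.2)) s.
Definition cen (n : nat) (c : C) : C := ((n%:Z ^+ 3 - n%:Z)%:~R / 12%:R * c).
Fixpoint act (c h : C) (J : seq nat) (n : nat) : seq (C * seq nat) :=
  match J with
  | [::] => if n == 0%N then [:: (h, [::])] else [::]
  | j :: J' => pre j (act c h J' n) ++
      (scl (n + j)%:R (if (j <= n)%N then act c h J' (n - j) else [:: (1, (j - n)%N :: J')]) ++
      (if n == j then [:: (cen n c, J')] else [::]))
  end.
Fixpoint actS (c h : C) (n : nat) (s : seq (C * seq nat)) : seq (C * seq nat) :=
  match s with
  | [::] => [::]
  | t :: s' => scl t.1 (act c h t.2 n) ++ actS c h n s'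
  end.
Definition d0 (h : C) (s : seq (C * seq nat)) : C :=
  \sum_(t <- s | sumn t.2 == 0%N) t.1 * h ^+ size t.2.

Lemma neq_hn (h : C) (n : nat) : (0 < n)%N -> h + n%:R != h.
Proof.
move=> n0; rewrite -subr_eq0 addrAC subrr add0r pnatr_eq0.
by rewrite -lt0n.
Qed.

Section Generic.
Variables (c : C) (V : lmodType C) (L : int -> V -> V).
Hypothesis hrep : vir_rep c L.

Lemma LDZ n a x y : L n (a *: x + y) = a *: L n x + L n y.
Proof. by case: hrep. Qed.

Lemma Lcomm n m x : L n (L m x) = L m (L n x) +
       ((n - m)%:~R *: L (n + m) x +
       (if n + m == 0 then ((n ^+ 3 - n)%:~R / 12%:R * c) *: x else 0)).
Proof. case: hrep => _ H; by rewrite -H addrC subrK. Qed.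

Lemma L0v n : L n 0 = 0.
Proof.
have := LDZ n 1 0 0; rewrite !scale1r !addr0 => e.
by have := subrr (L n 0); rewrite {1}e addrK.
Qed.

Lemma LD n x y : L n (x + y) = L n x + L n y.
Proof. by rewrite -[x]scale1r LDZ !scale1r. Qed.

Lemma LZ n a x : L n (a *: x) = a *: L n x.
Proof. by rewrite -[a *: x]addr0 LDZ L0v addr0. Qed.

Lemma LN n x : L n (- x) = - L n x.
Proof. by rewrite -scaleN1r LZ scaleN1r. Qed.

Lemma Lsum n (I : Type) (r : seq I) (P : pred I) (F : I -> V) :
  L n (\sum_(i <- r | P i) F i) = \sum_(i <- r | P i) L n (F i).
Proof. exact: (big_morph (L n) (LD n) (L0v n)). Qed.

Lemma lemE (X : Type) (l : seq X) (P : pred X) (F : X -> V) (mu : X -> C) (lam : C) (g : V) :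
  L 0 g = lam *: g -> (forall t, P t -> L 0 (F t) = mu t *: F t /\ mu t != lam) ->
  g = \sum_(t <- l | P t) F t -> g = 0.
Proof.
elim: l F g => [|x l IH] F g Hg HF; first by rewrite big_nil.
rewrite big_cons; case: ifP => Px; last exact: IH.
move=> eg.
have [Fx nx] := HF x Px.
set R := \sum_(t <- l | P t) F t in eg.
have key : (lam - mu x) *: g = \sum_(t <- l | P t) (mu t - mu x) *: F t.
  rewrite scalerBl -Hg eg LD Lsum Fx scalerDr.
  have -> : \sum_(t <- l | P t) L 0 (F t) = \sum_(t <- l | P t) mu t *: F t.
    by apply: eq_bigr => t Pt; case: (HF t Pt).
  rewrite /R scaler_sumr opprD addrACA subrr add0r -sumrB.
  by apply: eq_bigr => t _; rewrite scalerBl.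
have H0 : (lam - mu x) *: g = 0.
  apply: (IH (fun t => (mu t - mu x) *: F t) _ _ _ key).
  - by rewrite LZ Hg !scalerA mulrC.
  - move=> t Pt; have [Ft nt] := HF t Pt; split => //.
    by rewrite LZ Ft !scalerA mulrC.
move/eqP: H0; rewrite scaler_eq0 subr_eq0 eq_sym (negbTE nx) /=.
by move/eqP.
Qed.

Lemma lemE' (X : Type) (l : seq X) (P : pred X) (F : X -> V) (mu : X -> C) (lam mu0 : C) (g y0 : V) :
  L 0 g = lam *: g -> L 0 y0 = mu0 *: y0 -> mu0 != lam ->
  (forall t, P t -> L 0 (F t) = mu t *: F t /\ mu t != lam) ->
  g = y0 + \sum_(t <- l | P t) F t -> g = 0.
Proof.
move=> Hg Hy n0 HF eg.
have key : (lam - mu0) *: g = \sum_(t <- l | P t) (mu t - mu0) *: F t.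
  rewrite scalerBl -Hg eg LD Lsum Hy scalerDr.
  have -> : \sum_(t <- l | P t) L 0 (F t) = \sum_(t <- l | P t) mu t *: F t.
    by apply: eq_bigr => t Pt; case: (HF t Pt).
  rewrite scaler_sumr opprD addrACA subrr add0r -sumrB.
  by apply: eq_bigr => t _; rewrite scalerBl.
have H0 : (lam - mu0) *: g = 0.
  apply: (@lemE X l P (fun t => (mu t - mu0) *: F t) mu lam _ _ _ key).
  - by rewrite LZ Hg !scalerA mulrC.
  - move=> t Pt; have [Ft nt] := HF t Pt; split => //.
    by rewrite LZ Ft !scalerA mulrC.
move/eqP: H0; rewrite scaler_eq0 subr_eq0 eq_sym (negbTE n0) /=.
by move/eqP.
Qed.

Lemma sigma_cat s1 s2 w : sigma_act L (s1 ++ s2) w = sigma_act L s1 w + sigma_act L s2 w.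
Proof. by rewrite /sigma_act big_cat. Qed.

Lemma sigma_nil w : sigma_act L [::] w = 0.
Proof. by rewrite /sigma_act big_nil. Qed.

Lemma sigma_cons t s w : sigma_act L (t :: s) w = t.1 *: mono_act L t.2 w + sigma_act L s w.
Proof. by rewrite /sigma_act big_cons. Qed.

Lemma sigma1 a J w : sigma_act L [:: (a, J)] w = a *: mono_act L J w.
Proof. by rewrite sigma_cons sigma_nil addr0. Qed.

Lemma sigma_pre j s w : sigma_act L (pre j s) w = L (- j%:Z) (sigma_act L s w).
Proof.
rewrite /sigma_act /pre big_map Lsum; apply: eq_bigr => t _.
by rewrite LZ.
Qed.

Lemma sigma_scl a s w : sigma_act L (scl a s) w = a *: sigma_act L s w.
Proof.
rewrite /sigma_act /scl big_map scaler_sumr; apply: eq_bigr => t _.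
by rewrite scalerA.
Qed.

Lemma mono_eigen h w : hw_vector L h w ->
  forall J, L 0 (mono_act L J w) = (h + (sumn J)%:R) *: mono_act L J w.
Proof.
move=> [Hw _]; elim=> [|j J IH] /=; first by rewrite addr0.
rewrite Lcomm IH LZ.
have -> : (if 0 + - j%:Z == 0 then (((0:int) ^+ 3 - 0)%:~R / 12%:R * c) *: mono_act L J w else 0) = 0.
  case: ifP => _ //.
  by rewrite expr0n /= subr0 !mul0r scale0r.
rewrite addr0 sub0r opprK add0r -pmulrn natrD -scalerDl; congr (_ *: _); ring.
Qed.

Lemma mono_zero h w : hw_vector L h w ->
  forall J, sumn J = 0%N -> mono_act L J w = h ^+ size J *: w.
Proof.
move=> [Hw _]; elim=> [|j J IH] /=; first by rewrite scale1r.
move=> e.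
have ej : j = 0%N by lia.
have eJ : sumn J = 0%N by lia.
rewrite ej IH //= oppr0 LZ Hw scalerA exprS mulrC.
done.
Qed.

Lemma act_correct h w : hw_vector L h w ->
  forall J n, sigma_act L (act c h J n) w = L n%:Z (mono_act L J w).
Proof.
move=> hw; have [Hw0 Hwp] := hw.
elim=> [|j J IH] n /=.
  case: eqP => [->|nn]; first by rewrite sigma1 /= Hw0.
  rewrite sigma_nil Hwp //; rewrite ltz_nat; lia.
rewrite !sigma_cat sigma_pre IH sigma_scl [RHS]Lcomm.
congr (_ + _); congr (_ + _).
  have -> : ((n%:Z - - j%:Z)%:~R : C) = (n + j)%:R.
    by rewrite opprK -pmulrn natrD.
  congr (_ *: _).
  case: leqP => jn.
    by rewrite IH subzn.
  rewrite sigma1 scale1r /=.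
  congr (L _ _); lia.
have -> : (n%:Z + - j%:Z == 0) = (n == j).
  by rewrite subr_eq0 eqz_nat.
case: eqP => [->|_]; last by rewrite sigma_nil.
by rewrite sigma1 /cen.
Qed.

Lemma actS_correct h w : hw_vector L h w ->
  forall s n, sigma_act L (actS c h n s) w = L n%:Z (sigma_act L s w).
Proof.
move=> hw; elim=> [|t s IH] n /=; first by rewrite !sigma_nil L0v.
by rewrite sigma_cat sigma_scl act_correct // IH sigma_cons LD LZ.
Qed.

Definition spanw w y := exists s, y = sigma_act L s w.

Lemma span_closed h w : hw_vector L h w -> vir_closed L (spanw w).
Proof.
move=> hw; split.
- by exists [::]; rewrite sigma_nil.
- by move=> x y [s1 ->] [s2 ->]; exists (s1 ++ s2); rewrite sigma_cat.
- by move=> a x [s ->]; exists (scl a s); rewrite sigma_scl.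
- move=> n x [s ->]; case: n => k.
    by exists (actS c h k s); rewrite actS_correct.
  by exists (pre k.+1 s); rewrite sigma_pre NegzE.
Qed.

Lemma span_all h w : hw_vector L h w -> vir_generated L w -> forall y, spanw w y.
Proof.
move=> hw gen; apply: (gen (spanw w)); first exact: (span_closed _ _ hw).
by exists [:: (1, [::])]; rewrite sigma1 scale1r.
Qed.

Lemma sigma_split h w s : hw_vector L h w ->
  sigma_act L s w = d0 h s *: w + \sum_(t <- s | (0 < sumn t.2)%N) t.1 *: mono_act L t.2 w.
Proof.
move=> hw; rewrite /sigma_act (bigID (fun t => (0 < sumn t.2)%N)) /= addrC.
congr (_ + _); rewrite /d0 scaler_suml.
apply: eq_big => [t|t]; first by rewrite lt0n negbK.
by rewrite -leqNgt leqn0 => /eqP e; rewrite (mono_zero _ _ hw _ e) scalerA.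
Qed.

End Generic.
Arguments LDZ {c V L}.
Arguments Lcomm {c V L}.
Arguments L0v {c V L}.
Arguments LD {c V L}.
Arguments LZ {c V L}.
Arguments LN {c V L}.
Arguments Lsum {c V L}.
Arguments lemE {c V L} hrep {X}.
Arguments lemE' {c V L} hrep {X}.
Arguments sigma_cat {V}.
Arguments sigma_nil {V}.
Arguments sigma_cons {V}.
Arguments sigma1 {V}.
Arguments sigma_pre {c V L}.
Arguments sigma_scl {V}.
Arguments mono_eigen {c V L} hrep {h w}.
Arguments mono_zero {c V L} hrep {h w}.
Arguments act_correct {c V L} hrep {h w}.
Arguments actS_correct {c V L} hrep {h w}.
Arguments spanw {V}.
Arguments span_closed {c V L} hrep {h w}.
Arguments span_all {c V L} hrep {h w}.
Arguments sigma_split {c V L} hrep {h w}.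
From mathcomp Require Import all_boot all_order all_algebra.
From mathcomp Require Import zify ring.
Import GRing.Theory Num.Theory.
Local Open Scope ring_scope.

Lemma binZ0 p : binZ p 0 = 1.
Proof. by rewrite /binZ big_ord0 fact0 divr1. Qed.

Lemma binZ1 p : binZ p 1 = p%:~R.
Proof. by rewrite /binZ big_ord1 /= subr0 divr1. Qed.

Lemma binZ0S j : binZ 0 j.+1 = 0.
Proof. by rewrite /binZ big_ord_recl /= mulr0z subr0 !mul0r. Qed.

Lemma aux1 (R : comRingType) (a f x : R) : a * f * (-1 - x) = -1 * a * ((x + 1) * f).
Proof. ring. Qed.

Lemma prodN1 j : \prod_(i < j) (((-1 : int))%:~R - i%:R) = (-1) ^+ j * (j`!)%:R :> C.
Proof.
elim: j => [|j IH]; first by rewrite big_ord0 expr0 mul1r.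
rewrite big_ord_recr IH (_ : nat_of_ord (@ord_max j) = j) // factS natrM exprS mulrN1z -addn1 natrD.
exact: aux1.
Qed.

Lemma binZN1 j : binZ (-1) j = (-1) ^+ j.
Proof.
rewrite /binZ prodN1 mulfK //.
by rewrite pnatr_eq0 -lt0n fact_gt0.
Qed.

Section Fin.
Variable (V : lmodType C).

Lemma sum_trunc (t : nat -> V) K M : (K <= M)%N -> (forall j, (K <= j)%N -> t j = 0) ->
  \sum_(j < M) t j = \sum_(j < K) t j.
Proof.
move=> KM HK; elim: M KM => [|M IH] KM.
  by have -> : K = 0%N by lia.
case: (eqVneq K M.+1) => [->//|ne].
rewrite big_ord_recr /= IH; last by lia.
by rewrite HK ?addr0 //; lia.
Qed.

Lemma fin_le (t : nat -> V) X K : fin_sum t X -> (forall j, (K <= j)%N -> t j = 0) ->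
  X = \sum_(j < K) t j.
Proof.
move=> [N [HN ->]] HK.
rewrite -(@sum_trunc t N (maxn N K)) ?leq_maxl //.
by rewrite (@sum_trunc t K (maxn N K)) ?leq_maxr.
Qed.

Lemma fin_single (t : nat -> V) X j0 : fin_sum t X -> (forall j, j != j0 -> t j = 0) ->
  X = t j0.
Proof.
move=> H H0; rewrite (@fin_le t X j0.+1 H); last first.
  by move=> j jl; apply: H0; rewrite neq_ltn; apply/orP; right.
rewrite big_ord_recr /= big1 ?add0r // => i _.
by apply: H0; rewrite neq_ltn ltn_ord.
Qed.

Lemma fin_zero (t : nat -> V) X : fin_sum t X -> (forall j, t j = 0) -> X = 0.
Proof. by move=> H H0; rewrite (@fin_le t X 0 H) ?big_ord0. Qed.

Lemma fin_two (t : nat -> V) X : fin_sum t X -> (forall j, (2 <= j)%N -> t j = 0) -> X = t 0%N + t 1%N.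
Proof. by move=> H H0; rewrite (@fin_le t X 2 H H0) big_ord_recr big_ord1. Qed.

End Fin.

Lemma signsq k : ((-1) ^+ k * (-1) ^+ k : C) = 1.
Proof. by rewrite -exprMn mulrNN mulr1 expr1n. Qed.

Lemma Y2L (W : lmodType C) (L : int -> W -> W) Y : vir_modes L Y -> (forall n, L n 0 = 0) ->
  forall q w, Y [:: 2%N] q w = L (q - 1) w.
Proof.
move=> [Y0 YS] L0 q w.
have H := YS 2%N [::] q w.
have e1 : (1 - 2%:Z) = -1 :> int by [].
rewrite e1 in H.
have sg : sgnZ (-1) = -1 by rewrite /sgnZ /= expr1.
case: q H => k H.
- rewrite (@fin_single _ _ _ k H) /=.
  + rewrite !Y0 binZN1 signsq scale1r sg scaleN1r opprK.
    have -> : (Posz k + Posz k == -1) = false by apply/negbTE/eqP; lia.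
    have -> : (-1 + Posz k - Posz k == -1) = true by apply/eqP; lia.
    rewrite L0 add0r; congr (L _ _); lia.
  + move=> j jk; rewrite !Y0.
    have -> : (Posz k + Posz j == -1) = false by apply/negbTE/eqP; lia.
    have -> : (-1 + Posz k - Posz j == -1) = false by apply/negbTE/eqP; lia.
    by rewrite L0 scaler0 subr0 scaler0.
- rewrite NegzE in H *.
  rewrite (@fin_single _ _ _ k H) /=.
  + rewrite !Y0 binZN1 signsq scale1r sg scaleN1r opprK.
    have -> : (- Posz k.+1 + Posz k == -1) = true by apply/eqP; lia.
    have -> : (-1 + - Posz k.+1 - Posz k == -1) = false by apply/negbTE/eqP; lia.
    rewrite addr0; congr (L _ _); lia.
  + move=> j jk; rewrite !Y0.
    have -> : (- Posz k.+1 + Posz j == -1) = false by apply/negbTE/eqP; lia.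
    have -> : (-1 + - Posz k.+1 - Posz j == -1) = false by apply/negbTE/eqP; lia.
    by rewrite L0 scaler0 subr0 scaler0.
Qed.
Arguments fin_le {V t X} K _ _.
Arguments fin_single {V t X} j0 _ _.
Arguments fin_zero {V t X} _ _.
Arguments fin_two {V t X} _ _.

Lemma sum_all (V : lmodType C) (X : Type) (P : pred X) (s : seq X) (F : X -> V) :
  all P s -> \sum_(t <- s | P t) F t = \sum_(t <- s) F t.
Proof.
elim: s => [|x s IH] /=; first by rewrite !big_nil.
by case/andP=> Px As; rewrite !big_cons Px IH.
Qed.

Section Generic2.
Variables (c : C) (V : lmodType C) (L : int -> V -> V).
Hypothesis hrep : vir_rep c L.

Lemma split_zero h w s (a k : C) : hw_vector L h w ->
  a *: w = \sum_(t <- s | (0 < sumn t.2)%N) (k * t.1) *: mono_act L t.2 w -> a *: w = 0.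
Proof.
move=> hw e; have [H0 _] := hw.
apply: (lemE hrep s _ _ (fun t => h + (sumn t.2)%:R) h _ _ _ e).
  by rewrite (LZ hrep) H0 !scalerA mulrC.
move=> t Pt; split; last exact: neq_hn.
by rewrite (LZ hrep) (mono_eigen hrep hw) !scalerA mulrC.
Qed.

Lemma transfer_aux h w s : hw_vector L h w ->
  sigma_act L s w = d0 h s *: w + \sum_(t <- s | (0 < sumn t.2)%N) (1 * t.1) *: mono_act L t.2 w.
Proof.
move=> hw; rewrite (sigma_split hrep s hw); congr (_ + _).
by apply: eq_bigr => t _; rewrite mul1r.
Qed.

End Generic2.
Arguments split_zero {c V L} hrep {h w} s a k.
Arguments transfer_aux {c V L} hrep {h w} s.

Lemma transfer c h (V W : lmodType C) (LV : int -> V -> V) (LW : int -> W -> W) v w :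
  vir_rep c LV -> vir_rep c LW -> hw_vector LV h v -> hw_vector LW h w -> v != 0 -> w <> 0 ->
  vir_irreducible LW ->
  forall s, sigma_act LV s v = 0 -> sigma_act LW s w = 0.
Proof.
move=> rV rW hv hw nv nw irr s0 e0.
case: (eqVneq (sigma_act LW s0 w) 0) => // ne.
pose K := fun y => exists s, sigma_act LV s v = 0 /\ y = sigma_act LW s w.
have Kc : vir_closed LW K.
  split.
  - by exists [::]; rewrite !sigma_nil.
  - move=> x y [s1 [e1 ->]] [s2 [e2 ->]]; exists (s1 ++ s2).
    by rewrite !sigma_cat e1 e2 addr0.
  - move=> a x [s [e ->]]; exists (scl a s).
    by rewrite !sigma_scl e scaler0.
  - move=> n x [s [e ->]]; case: n => k.
      exists (actS c h k s).
      by rewrite (actS_correct rV hv) (actS_correct rW hw) e (L0v rV).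
    exists (pre k.+1 s).
    by rewrite (sigma_pre rV) (sigma_pre rW) e (L0v rV) NegzE.
have [s [ev ew]] : K w.
  apply: (irr K Kc); exists (sigma_act LW s0 w); split; last by apply/eqP.
  by exists s0.
have z1 : d0 h s *: v = 0.
  apply: (split_zero rV s _ (-1) hv).
  move: ev; rewrite (transfer_aux rV s hv) => /eqP; rewrite addr_eq0 => /eqP ->.
  rewrite -sumrN; apply: eq_bigr => t _.
  by rewrite mul1r mulN1r scaleNr.
have z2 : (1 - d0 h s) *: w = 0.
  apply: (split_zero rW s _ 1 hw).
  by rewrite scalerBl scale1r {1}ew (transfer_aux rW s hw) addrAC subrr add0r.
move/eqP: z1; rewrite scaler_eq0 (negbTE nv) orbF => /eqP d00.
move/eqP: z2; rewrite scaler_eq0 d00 subr0 oner_eq0 /= => /eqP.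
by [].
Qed.
From Stdlib Require Import Classical.
From mathcomp Require Import all_boot all_order all_algebra.
From mathcomp Require Import zify ring.
Import GRing.Theory Num.Theory.
Local Open Scope ring_scope.

Section Inter.
Variables (c : C) (M1 M2 M3 : lmodType C)
  (L1 : int -> M1 -> M1) (L2 : int -> M2 -> M2) (L3 : int -> M3 -> M3)
  (Y1 : seq nat -> int -> M1 -> M1) (Y2 : seq nat -> int -> M2 -> M2)
  (Y3 : seq nat -> int -> M3 -> M3) (I : M1 -> C -> M2 -> M3)
  (h1 h2 h3 : C) (w1 : M1) (w2 : M2) (w3 : M3).
Hypotheses (r1 : vir_rep c L1) (r2 : vir_rep c L2) (r3 : vir_rep c L3)
  (hw1 : hw_vector L1 h1 w1) (hw2 : hw_vector L2 h2 w2) (hw3 : hw_vector L3 h3 w3)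
  (m1 : vir_modes L1 Y1) (m2 : vir_modes L2 Y2) (m3 : vir_modes L3 Y3)
  (hI : intertwining L1 L2 L3 Y1 Y2 Y3 I).

Lemma IDZa al a a' x b : I (al *: a + a') x b = al *: I a x b + I a' x b.
Proof. by case: hI. Qed.
Lemma IDZb al a x b b' : I a x (al *: b + b') = al *: I a x b + I a x b'.
Proof. by case: hI => _ []. Qed.
Lemma I0a x b : I 0 x b = 0.
Proof.
have := IDZa 1 0 0 x b; rewrite !scale1r !addr0 => e.
by have := subrr (I 0 x b); rewrite {1}e addrK.
Qed.
Lemma I0b a x : I a x 0 = 0.
Proof.
have := IDZb 1 a x 0 0; rewrite !scale1r !addr0 => e.
by have := subrr (I a x 0); rewrite {1}e addrK.
Qed.
Lemma IZa al a x b : I (al *: a) x b = al *: I a x b.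
Proof. by rewrite -[al *: a]addr0 IDZa I0a addr0. Qed.
Lemma IZb al a x b : I a x (al *: b) = al *: I a x b.
Proof. by rewrite -[al *: b]addr0 IDZb I0b addr0. Qed.
Lemma IDb a x b b' : I a x (b + b') = I a x b + I a x b'.
Proof. by rewrite -[b]scale1r IDZb !scale1r. Qed.
Lemma Isumb a x (J : Type) (r : seq J) (P : pred J) (F : J -> M2) :
  I a x (\sum_(i <- r | P i) F i) = \sum_(i <- r | P i) I a x (F i).
Proof. exact: (big_morph (I a x) (IDb a x) (I0b a x)). Qed.

Lemma T2 a x b : I (L1 (-1) a) x b = - x *: I a (x - 1) b.
Proof. by case: hI => _ [_ [_ [_ [H _]]]]; apply: H. Qed.

Lemma Jac (v : seq nat) a b (n m : int) (k' : C) : virc_basis v ->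
     exists X : M3,
       fin_sum (fun j : nat =>
          ((-1) ^+ j * binZ n j) *:
            (Y3 v (m + n - j%:Z) (I a (k' + j%:R) b)
             - sgnZ n *: I a (n%:~R + k' - j%:R) (Y2 v (m + j%:Z) b))) X /\
       fin_sum (fun j : nat =>
          binZ m j *: I (Y1 v (n + j%:Z) a) (m%:~R + k' - j%:R) b) X.
Proof. by case: hI => _ [_ [_ [_ [_ H]]]]; apply: H. Qed.

Lemma Y1L q a : Y1 [:: 2%N] q a = L1 (q - 1) a.
Proof. by apply: Y2L => // n; exact: (L0v r1). Qed.
Lemma Y2L' q a : Y2 [:: 2%N] q a = L2 (q - 1) a.
Proof. by apply: Y2L => // n; exact: (L0v r2). Qed.
Lemma Y3L q a : Y3 [:: 2%N] q a = L3 (q - 1) a.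
Proof. by apply: Y2L => // n; exact: (L0v r3). Qed.

Lemma comm_w1 (M : int) x b :
  L3 M (I w1 x b) - I w1 x (L2 M b) =
  ((M + 1)%:~R * h1 - ((M + 1)%:~R + x)) *: I w1 (x + M%:~R) b.
Proof.
have [X [H1 H2]] := Jac [:: 2%N] w1 b 0 (M + 1) x isT.
have -> : L3 M (I w1 x b) - I w1 x (L2 M b) = X.
  rewrite (fin_single 0%N H1); last first.
    by case=> [//|j] _; rewrite binZ0S mulr0 scale0r.
  rewrite binZ0 expr0 mul1r scale1r /sgnZ expr0 scale1r Y3L Y2L'.
  have -> : M + 1 + 0 - (0%N)%:Z - 1 = M by lia.
  have -> : M + 1 + (0%N)%:Z - 1 = M by lia.
  have -> : x + (0%N)%:R = x by rewrite addr0.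
  by have -> : (0:int)%:~R + x - (0%N)%:R = x by rewrite mulr0z add0r subr0.
rewrite (fin_two H2); last first.
  case=> [//|[//|j]] _; rewrite Y1L.
  have [_ Hp] := hw1; rewrite Hp ?I0a ?scaler0 //; lia.
rewrite !Y1L binZ0 binZ1.
have -> : 0 + 0%:Z - 1 = -1 :> int by [].
have -> : 0 + 1%:Z - 1 = 0 :> int by [].
have [H0 _] := hw1.
rewrite T2 H0 IZa !scalerA mul1r.
have -> : (M + 1)%:~R + x - (0%N)%:R - 1 = x + M%:~R.
  rewrite intrD subr0. ring.
have -> : (M + 1)%:~R + x - (1%N)%:R = x + M%:~R.
  rewrite intrD. ring.
rewrite -scalerDl subr0; congr (_ *: _).
ring.
Qed.
Hypotheses (gen1 : vir_generated L1 w1) (gen2 : vir_generated L2 w2)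
  (gen3 : vir_generated L3 w3) (irr3 : vir_irreducible L3) (nz3 : w3 <> 0).

Definition P3 (y : M3) := exists s, all (fun t => (0 < sumn t.2)%N) s /\ y = sigma_act L3 s w3.

Lemma P0 : P3 0.
Proof. by exists [::]; rewrite sigma_nil. Qed.
Lemma PD x y : P3 x -> P3 y -> P3 (x + y).
Proof.
move=> [s1 [a1 ->]] [s2 [a2 ->]]; exists (s1 ++ s2).
by rewrite all_cat a1 a2 sigma_cat.
Qed.
Lemma PZ a x : P3 x -> P3 (a *: x).
Proof.
move=> [s [a1 ->]]; exists (scl a s); split; last by rewrite sigma_scl.
by rewrite /scl all_map.
Qed.
Lemma PB x y : P3 x -> P3 y -> P3 (x - y).
Proof. by move=> Px Py; apply: PD => //; rewrite -scaleN1r; apply: PZ. Qed.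
Lemma PL j x : P3 x -> P3 (L3 (- j%:Z) x).
Proof.
move=> [s [a1 ->]]; exists (pre j s); split; last by rewrite (sigma_pre r3).
rewrite /pre all_map; apply: sub_all a1 => t /=; lia.
Qed.
Lemma PLany j x : (0 < j)%N -> P3 (L3 (- j%:Z) x).
Proof.
move=> j0; have [s ->] := span_all r3 hw3 gen3 x.
exists (pre j s); split; last by rewrite (sigma_pre r3).
rewrite /pre all_map; apply/allP => t _ /=; lia.
Qed.

Lemma Ldec y : exists d s, all (fun t => (0 < sumn t.2)%N) s /\ y = d *: w3 + sigma_act L3 s w3.
Proof.
have [s ->] := span_all r3 hw3 gen3 y.
exists (d0 h3 s), (filter (fun t => (0 < sumn t.2)%N) s); split; first exact: filter_all.
by rewrite (sigma_split r3 s hw3) /sigma_act big_filter.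
Qed.

Lemma Fw3 : ~ P3 w3.
Proof.
move=> [s [a1 e]]; apply: nz3.
have [H0 _] := hw3.
apply: (lemE r3 s (fun t => (0 < sumn t.2)%N) (fun t => t.1 *: mono_act L3 t.2 w3)
          (fun t => h3 + (sumn t.2)%:R) h3 w3 H0).
  move=> t Pt; split; last exact: neq_hn.
  by rewrite (LZ r3) (mono_eigen r3 hw3) !scalerA mulrC.
by rewrite sum_all.
Qed.

Lemma y_notP x : ~ P3 (I w1 x w2) -> x = h1 + h2 - h3 - 1.
Proof.
move=> nP.
have e := comm_w1 0 x w2.
have [H20 _] := hw2.
rewrite H20 IZb add0r mulr1z mulr0z mul1r addr0 in e.
have eig : L3 0 (I w1 x w2) = (h2 + (h1 - (1 + x))) *: I w1 x w2.
  by rewrite scalerDl -e addrC subrK.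
case: (eqVneq (h2 + (h1 - (1 + x))) h3) => [eh|ne].
  rewrite -eh; ring.
exfalso; apply: nP.
have [d [s [a1 ey]]] := Ldec (I w1 x w2).
have [H30 _] := hw3.
have z : d *: w3 = 0.
  apply: (lemE' r3 s (fun t => (0 < sumn t.2)%N) (fun t => - (t.1 *: mono_act L3 t.2 w3))
          (fun t => h3 + (sumn t.2)%:R) h3 (h2 + (h1 - (1 + x))) _ (I w1 x w2)).
  - by rewrite (LZ r3) H30 !scalerA mulrC.
  - exact: eig.
  - exact: ne.
  - move=> t Pt; split; last exact: neq_hn.
    by rewrite (LN r3) (LZ r3) (mono_eigen r3 hw3) scalerN !scalerA mulrC.
  - rewrite sum_all // sumrN -/(sigma_act L3 s w3) ey.
    by rewrite addrK.
by rewrite ey z add0r; exists s.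
Qed.

Fixpoint coefI (h1 : C) (J : seq nat) (x : C) : C :=
  match J with
  | [::] => 1
  | j :: J' => (x + 1 - j%:R + (j%:R - 1) * h1) * coefI h1 J' (x - j%:R)
  end.

Lemma stepI J : all (fun j => (0 < j)%N) J -> forall x,
  P3 (I w1 x (mono_act L2 J w2) - coefI h1 J x *: I w1 (x - (sumn J)%:R) w2).
Proof.
elim: J => [|j J IH].
  by move=> _ x /=; rewrite mulr0n subr0 scale1r subrr; apply: P0.
move=> /andP [j0 aJ] x.
have e := comm_w1 (- j%:Z) x (mono_act L2 J w2).
have -> : I w1 x (L2 (- j%:Z) (mono_act L2 J w2)) =
   L3 (- j%:Z) (I w1 x (mono_act L2 J w2)) -
   ((- j%:Z + 1)%:~R * h1 - ((- j%:Z + 1)%:~R + x)) *: I w1 (x - j%:R) (mono_act L2 J w2).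
  have e' : x + (- j%:Z)%:~R = x - j%:R by rewrite intrN -pmulrn.
  by rewrite -e' -e opprB addrC subrK.
have IHx := IH aJ (x - j%:R).
set g := ((- j%:Z + 1)%:~R * h1 - ((- j%:Z + 1)%:~R + x)).
have eg : - g = x + 1 - j%:R + (j%:R - 1) * h1.
  by rewrite /g intrD intrN -pmulrn; ring.
have -> : x - (j + sumn J)%:R = x - j%:R - (sumn J)%:R by rewrite natrD opprD addrA.
set B := I w1 (x - j%:R) (mono_act L2 J w2).
set D := I w1 (x - j%:R - (sumn J)%:R) w2.
have -> : L3 (- j%:Z) (I w1 x (mono_act L2 J w2)) - g *: B -
    ((x + 1 - j%:R + (j%:R - 1) * h1) * coefI h1 J (x - j%:R)) *: D =
    L3 (- j%:Z) (I w1 x (mono_act L2 J w2)) + (- g) *: (B - coefI h1 J (x - j%:R) *: D).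
  by rewrite scalerBr scalerA -eg scaleNr addrA.
by apply: PD; [apply: PLany | apply: PZ].
Qed.

Lemma stepS (n : nat) s : all (fun t => all (fun j => (0 < j)%N) t.2 && (sumn t.2 == n)) s ->
  forall x, P3 (I w1 x (sigma_act L2 s w2) -
                (\sum_(t <- s) t.1 * coefI h1 t.2 x) *: I w1 (x - n%:R) w2).
Proof.
elim: s => [|t s IH]; first by move=> _ x; rewrite sigma_nil I0b big_nil scale0r subrr; apply: P0.
move=> /andP [/andP [at1 /eqP st] As] x.
rewrite sigma_cons IDb IZb big_cons scalerDl.
have -> : t.1 *: I w1 x (mono_act L2 t.2 w2) + I w1 x (sigma_act L2 s w2) -
   ((t.1 * coefI h1 t.2 x) *: I w1 (x - n%:R) w2 +
    (\sum_(j <- s) j.1 * coefI h1 j.2 x) *: I w1 (x - n%:R) w2) =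
   t.1 *: (I w1 x (mono_act L2 t.2 w2) - coefI h1 t.2 x *: I w1 (x - (sumn t.2)%:R) w2) +
   (I w1 x (sigma_act L2 s w2) - (\sum_(j <- s) j.1 * coefI h1 j.2 x) *: I w1 (x - n%:R) w2).
  rewrite st scalerBr scalerA opprD !addrA; congr (_ + _).
  by rewrite addrAC.
by apply: PD; [apply: PZ; apply: stepI | apply: IH].
Qed.

Lemma witt_snd lam mu J : (witt_mono lam mu J).2 = (sumn J)%:Z.
Proof.
elim: J => [|j J IH] //.
by rewrite /witt_mono /= -/(witt_mono lam mu J) IH addrC.
Qed.

Lemma coefI_witt J : coefI h1 J (h1 + h2 - h3 - 1 + (sumn J)%:R) =
  (witt_mono (- h1) (h2 - h3 - h1) J).1.
Proof.
elim: J => [|j J IH] //.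
rewrite [coefI _ _ _]/= [witt_mono _ _ _]/= -/(witt_mono (- h1) (h2 - h3 - h1) J).
rewrite [(witt_step _ _ _ _).1]/= witt_snd -IH.
have -> : h1 + h2 - h3 - 1 + (sumn (j :: J))%:R - j%:R = h1 + h2 - h3 - 1 + (sumn J)%:R.
  rewrite [sumn _]/= natrD; ring.
rewrite mulrC; congr (_ * _).
rewrite -pmulrn [sumn _]/= natrD -addn1 natrD; ring.
Qed.

Lemma exists_w1 : (exists a x b, I a x b <> 0) -> exists x b, I w1 x b <> 0.
Proof.
move=> [a0 [x0 [b0 nz]]].
apply: NNPP => H.
have Hw : forall x b, I w1 x b = 0.
  move=> x b; apply: NNPP => ne; apply: H; by exists x, b.
pose A := fun a => forall x b, I a x b = 0.
have Ac : vir_closed L1 A.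
  split.
  - by move=> x b; rewrite I0a.
  - by move=> a a' Ha Ha' x b; rewrite -[a]scale1r IDZa Ha Ha' scaler0 addr0.
  - by move=> al a Ha x b; rewrite IZa Ha scaler0.
  - move=> n a Ha x b.
    have [X [H1 H2]] := Jac [:: 2%N] a b (n + 1) 0 x isT.
    have e0 : X = 0.
      by apply: (fin_zero H1) => j; rewrite Y3L Ha (L0v r3) Ha scaler0 subrr scaler0.
    rewrite (fin_single 0%N H2) in e0; last by case=> [//|j] _; rewrite binZ0S scale0r.
    move: e0; rewrite binZ0 scale1r Y1L.
    have -> : n + 1 + (0%N)%:Z - 1 = n by lia.
    by rewrite mulr0z add0r subr0.
by apply: nz; apply: (gen1 A Ac Hw).
Qed.

Lemma exists_notP : (exists x b, I w1 x b <> 0) -> exists x, ~ P3 (I w1 x w2).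
Proof.
move=> [x1 [b1 nz]].
apply: NNPP => H.
have Hw : forall x, P3 (I w1 x w2).
  move=> x; apply: NNPP => ne; apply: H; by exists x.
have HJ : forall J x, P3 (I w1 x (mono_act L2 J w2)).
  elim=> [|j J IH] x //.
  have e := comm_w1 (- j%:Z) x (mono_act L2 J w2).
  have -> : I w1 x (mono_act L2 (j :: J) w2) =
     L3 (- j%:Z) (I w1 x (mono_act L2 J w2)) -
     ((- j%:Z + 1)%:~R * h1 - ((- j%:Z + 1)%:~R + x)) *: I w1 (x + (- j%:Z)%:~R) (mono_act L2 J w2).
    by rewrite -e opprB addrC subrK.
  by apply: PB; [apply: PL | apply: PZ].
have Hb : forall x b, P3 (I w1 x b).
  move=> x b; have [s ->] := span_all r2 hw2 gen2 b.
  rewrite /sigma_act Isumb.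
  elim: s => [|t s IH]; first by rewrite big_nil; apply: P0.
  by rewrite big_cons IZb; apply: PD => //; apply: PZ.
pose Q := fun y => exists l : seq (C * C * M2), y = \sum_(t <- l) t.1.1 *: I w1 t.1.2 t.2.
have Qc : vir_closed L3 Q.
  split.
  - by exists [::]; rewrite big_nil.
  - by move=> x y [l1 ->] [l2 ->]; exists (l1 ++ l2); rewrite big_cat.
  - move=> a x [l ->]; exists (map (fun t => (a * t.1.1, t.1.2, t.2)) l).
    by rewrite big_map scaler_sumr; apply: eq_bigr => t _; rewrite scalerA.
  - move=> n x [l ->]; elim: l => [|t l [l' IH]].
      by exists [::]; rewrite big_nil (L0v r3).
    exists ((t.1.1, t.1.2, L2 n t.2) ::
            (t.1.1 * ((n + 1)%:~R * h1 - ((n + 1)%:~R + t.1.2)), t.1.2 + n%:~R, t.2) :: l').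
    rewrite big_cons (LD r3) IH !big_cons /= addrA; congr (_ + _).
    rewrite (LZ r3) -scalerA -scalerDr; congr (_ *: _).
    by rewrite -comm_w1 addrC subrK.
have QP : forall y, Q y -> P3 y.
  move=> y [l ->]; elim: l => [|t l IH]; first by rewrite big_nil; apply: P0.
  by rewrite big_cons; apply: PD => //; apply: PZ.
apply: Fw3; apply: QP; apply: (irr3 Q Qc).
exists (I w1 x1 b1); split => //.
by exists [:: (1, x1, b1)]; rewrite big_cons big_nil addr0 scale1r.
Qed.

Lemma inter_main (n : nat) (sg : seq (C * seq nat)) :
  all (fun t => all (fun j => (0 < j)%N) t.2 && (sumn t.2 == n)) sg ->
  sigma_act L2 sg w2 = 0 -> (exists a x b, I a x b <> 0) ->
  witt_rho sg (- h1) (h2 - h3 - h1) = 0.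
Proof.
move=> As z0 ne.
have [x nP] := exists_notP (exists_w1 ne).
have ex := y_notP x nP.
have := stepS n sg As (x + n%:R).
rewrite z0 I0b sub0r addrK. 
have -> : \sum_(t <- sg) t.1 * coefI h1 t.2 (x + n%:R) = witt_rho sg (- h1) (h2 - h3 - h1).
  rewrite /witt_rho; apply: eq_big_seq => t ts.
  have /andP [_ /eqP st] := allP As t ts.
  by rewrite ex -st coefI_witt.
case: (eqVneq (witt_rho sg (- h1) (h2 - h3 - h1)) 0) => // nr P.
exfalso; apply: nP.
have := PZ (- (witt_rho sg (- h1) (h2 - h3 - h1))^-1) _ P.
by rewrite scalerN scaleNr opprK scalerA mulVf // scale1r.
Qed.
End Inter.
From mathcomp Require Import all_boot all_order all_algebra.
From mathcomp Require Import zify.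
Import GRing.Theory Num.Theory.
Local Open Scope ring_scope.

Theorem mainTheorem12 (p q k l r s : nat) (h : C) (sigma : seq (C * seq nat)) :
  (2 <= p)%N -> (2 <= q)%N -> coprime p q ->
  (0 < k < p)%N -> (0 < r < p)%N -> (0 < l < q)%N -> (0 < s < q)%N ->
  all (fun t => is_partition_of t.2 (r * s)) sigma ->
  verma_singular (cpq p q) (hkl p q r s) sigma ->
  nonzero_intertwining_exists (cpq p q) (hkl p q k l) (hkl p q r s) h ->
  witt_rho sigma (- hkl p q k l) (hkl p q r s - h - hkl p q k l) = 0.
Proof.
move=> hp hq cop hk hr hl hs Hsig [V [Lv [v [[rv hwv genv indep] nzs sing]]]].
move=> [M1 [M2 [M3 [L1 [L2 [L3 [w1 [w2 [w3 [Y1 [Y2 [Y3 [I [[irr1 irr2 irr3] [[m1 m2 m3] [hI ne]]]]]]]]]]]]]]]].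
case: irr1 => r1 nz1 hw1 g1 ir1.
case: irr2 => r2 nz2 hw2 g2 ir2.
case: irr3 => r3 nz3 hw3 g3 ir3.
have nv : v != 0.
  apply/eqP => v0.
  have := indep [:: (1, [::])] isT isT.
  by rewrite big_cons big_nil /= scale1r addr0 v0 => /(_ erefl); rewrite oner_eq0.
have Hs : all (fun t => all (fun j => (0 < j)%N) t.2 && (sumn t.2 == (r * s)%N)) sigma.
  by apply: sub_all Hsig => t /andP [/andP [_ a] ->]; rewrite andbT.
set u := sigma_act L2 sigma w2.
have up : forall n : nat, (0 < n)%N -> L2 n%:Z u = 0.
  move=> n n0; rewrite /u -(actS_correct r2 hw2).
  apply: (transfer _ _ _ _ _ _ _ _ rv r2 hwv hw2 nv nz2 ir2).
  rewrite (actS_correct rv hwv); case: sing => sg1 _; apply: sg1.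
  by rewrite ltz_nat.
have eu : L2 0 u = (hkl p q r s + (r * s)%:R) *: u.
  rewrite /u /sigma_act (Lsum r2) scaler_sumr; apply: eq_big_seq => t ts.
  have /andP [_ /eqP st] := allP Hs t ts.
  by rewrite (LZ r2) (mono_eigen r2 hw2) st !scalerA mulrC.
have hwu : hw_vector L2 (hkl p q r s + (r * s)%:R) u.
  split => // -[n|n] n0 //; apply: up; move: n0; rewrite ltz_nat.
  done.
have u0 : u = 0.
  case: (eqVneq u 0) => // nu.
  have [s' e] : spanw L2 u w2.
    apply: (ir2 _ (span_closed r2 hwu)); exists u; split; last by apply/eqP.
    by exists [:: (1, [::])]; rewrite sigma1 scale1r.
  exfalso; apply: nz2.
  have [H0 _] := hw2.
  apply: (lemE r2 s' xpredT (fun t => t.1 *: mono_act L2 t.2 u)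
           (fun t => hkl p q r s + (r * s + sumn t.2)%:R) (hkl p q r s) w2 H0 _ e).
  move=> t _; split.
    by rewrite (LZ r2) (mono_eigen r2 hwu) natrD addrA !scalerA mulrC.
  apply: neq_hn; rewrite addn_gt0 muln_gt0; lia.
exact: (@inter_main _ _ _ _ _ _ _ _ _ _ _ _ _ _ _ _ _ r1 r2 r3 hw1 hw2 hw3 m1 m2 m3 hI
          g1 g2 g3 ir3 nz3 _ _ Hs u0 ne).
Qed.
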